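(* Let $T\ge 1$ be an integer and let $\phi:\mathbb R\to(0,1)$ be a gate function. Consider the loss $L(z)=|\phi(z)^{T}-1|$ and the gradient flow $\frac{dz}{d\tau}=-\frac{\partial L}{\partial z}$ with an arbitrary initial value $z(0)\in\mathbb R$, and let $f(\tau)=\phi(z(\tau))$. (a) If $\phi=\sigma$ is the sigmoid function $\sigma(z)=1/(1+e^{-z})$, then $1-f(\tau)=O(\tau^{-1})$ as $\tau\to\infty$. (b) If $\phi=\sigma_{\rm ns}$ is the normalized softsign function $\sigma_{\rm ns}(z)=\frac12\left(\frac{z}{2+|z|}+1\right)$, then $1-f(\tau)=O(\tau^{-1/3})$ as $\tau\to\infty$.
   Context: This is a model problem for learning long time scales: $T=t_1-t_0$ is a time difference, $f=\phi(z)$ is a forget-gate value, and the target decay factor is $\lambda_*=1$. Note $\sigma_{\rm ns}(z)=(\mathrm{softsign}(z/2)+1)/2$ with $\mathrm{softsign}(z)=z/(1+|z|)$. *)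

(* Defs.v *)
From Stdlib Require Import Reals.
From Coquelicot Require Import Coquelicot.
Open Scope R_scope.

Definition sigmoid (z : R) : R := 1 / (1 + exp (- z)).

Definition softsign_ns (z : R) : R := (z / (2 + Rabs z) + 1) / 2.

Definition loss (phi : R -> R) (T : nat) (z : R) : R := Rabs (phi z ^ T - 1).

Definition gradient_flow (phi : R -> R) (T : nat) (z : R -> R) : Prop :=
  forall tau, 0 < tau ->
    exists dL, is_derive (loss phi T) (z tau) dL /\ is_derive z tau (- dL).

Definition bigO_infty (g h : R -> R) : Prop :=
  exists C M, forall tau, M <= tau -> Rabs (g tau) <= C * Rabs (h tau).

(* Main.v *)
Require Import Defs.
From Stdlib Require Import Reals Lra Lia.
From Coquelicot Require Import Coquelicot.
Open Scope R_scope.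

Lemma incr_lemma (F dF : R -> R) c a b : a <= b ->
  (forall t, a <= t <= b -> is_derive F t (dF t)) ->
  (forall t, a <= t <= b -> c <= dF t) -> F a + c * (b - a) <= F b.
Proof.
intros hab hd hc.
destruct (MVT_gen F a b dF) as [x [hx e]].
- intros x; rewrite Rmin_left, Rmax_right by lra; intros; apply hd; lra.
- intros x; rewrite Rmin_left, Rmax_right by lra; intros hx.
  apply derivable_continuous_pt. exists (dF x). apply is_derive_Reals; apply hd; lra.
- rewrite Rmin_left, Rmax_right in hx by lra.
  assert (c <= dF x) by (apply hc; lra). nra.
Qed.

Lemma small_bound a eps : 0 <= a -> a < eps -> Rabs (- a / (4 * (2 + a))) < eps.
Proof.
intros h1 h2. 
assert (0 <= a / (4 * (2 + a))) by (apply Rdiv_le_0_compat; lra).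
assert (a / (4 * (2 + a)) <= a).
  { apply Rmult_le_reg_r with (4*(2+a)); [lra|]. field_simplify; [nra|lra]. }
rewrite Rabs_left1.
- unfold Rdiv in *. lra.
- unfold Rdiv in *. lra.
Qed.

Lemma softsign_deriv x : is_derive softsign_ns x (/ (2 + Rabs x) ^ 2).
Proof.
destruct (Rtotal_order x 0) as [h|[h|h]].
- apply is_derive_ext_loc with (fun y => / (2 - y)).
  + apply filter_imp with (fun u => u < 0); [|apply (open_lt 0); exact h]. intros. unfold softsign_ns; match goal with |- ?a = ?b => change (@eq R a b) end;
    rewrite Rabs_left by lra. field. lra.
  + rewrite Rabs_left by lra. auto_derive; [lra|]. field. lra.
- subst. apply is_derive_Reals. intros eps he. exists (mkposreal eps he).
  intros hh hne hlt. simpl in hlt. 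
  assert (E: (softsign_ns (0 + hh) - softsign_ns 0) / hh - / (2 + Rabs 0) ^ 2
     = - Rabs hh / (4 * (2 + Rabs hh))).
  { unfold softsign_ns; rewrite Rplus_0_l, Rabs_R0.
    destruct (Rle_or_lt 0 hh); [rewrite Rabs_right by lra | rewrite Rabs_left by lra];
    field; lra. }
  rewrite E. apply small_bound; [apply Rabs_pos|lra].
- apply is_derive_ext_loc with (fun y => (y+1) / (2 + y)).
  + apply filter_imp with (fun u => 0 < u); [|apply (open_gt 0); exact h]. intros. unfold softsign_ns; match goal with |- ?a = ?b => change (@eq R a b) end;
    rewrite Rabs_right by lra. field. lra.
  + rewrite Rabs_right by lra. auto_derive; [lra|]. field. lra.
Qed.

Definition Pot (z : R) : R := 4 * z + 2 * (z * Rabs z) + z ^ 3 / 3.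

Lemma pot_deriv x : is_derive Pot x ((2 + Rabs x) ^ 2).
Proof.
destruct (Rtotal_order x 0) as [h|[h|h]].
- apply is_derive_ext_loc with (fun y => 4 * y - 2 * (y * y) + y ^ 3 / 3).
  + apply filter_imp with (fun u => u < 0); [|apply (open_lt 0); exact h]. intros. unfold Pot; match goal with |- ?a = ?b => change (@eq R a b) end;
    rewrite Rabs_left by lra. ring.
  + rewrite Rabs_left by lra. auto_derive; [easy|]. match goal with |- ?a = ?b => change (@eq R a b) end; field.
- subst. apply is_derive_Reals. intros eps he.
  exists (mkposreal (Rmin (eps/4) 1) ltac:(apply Rmin_pos; lra)).
  intros hh hne hlt. simpl in hlt. 
  assert (E: (Pot (0 + hh) - Pot 0) / hh - (2 + Rabs 0) ^ 2
     = 2 * Rabs hh + hh^2/3).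
  { unfold Pot; rewrite Rplus_0_l, Rabs_R0. field. lra. }
  rewrite E. pose proof (Rmin_l (eps/4) 1). pose proof (Rmin_r (eps/4) 1).
  pose proof (Rabs_pos hh). 
  assert (hh^2 = Rabs hh * Rabs hh) by (rewrite <- Rabs_mult, Rabs_right; [ring|nra]).
  rewrite Rabs_right; nra.
- apply is_derive_ext_loc with (fun y => 4 * y + 2 * (y * y) + y ^ 3 / 3).
  + apply filter_imp with (fun u => 0 < u); [|apply (open_gt 0); exact h]. intros. unfold Pot; match goal with |- ?a = ?b => change (@eq R a b) end;
    rewrite Rabs_right by lra. ring.
  + rewrite Rabs_right by lra. auto_derive; [easy|]. match goal with |- ?a = ?b => change (@eq R a b) end; field.
Qed.

Lemma flow_deriv phi dphi T z : (forall x, 0 < phi x < 1) ->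
  (forall x, is_derive phi x (dphi x)) -> gradient_flow phi T z ->
  forall tau, 0 < tau ->
  is_derive z tau (INR T * dphi (z tau) * phi (z tau) ^ Init.Nat.pred T).
Proof.
intros hp hd hf tau ht. destruct (hf tau ht) as [dL [h1 h2]].
pose proof (is_derive_minus (fun _ => 1) (fun x => phi x ^ T) (z tau) 0 _
   (is_derive_const 1 (z tau)) (is_derive_pow phi T _ _ (hd (z tau)))) as Hd.
assert (h3 : is_derive (loss phi T) (z tau)
   (0 - (INR T * dphi (z tau) * phi (z tau) ^ Init.Nat.pred T))).
{ apply is_derive_ext with (fun x => 1 - (phi x ^ T)).
  - intros t. unfold loss.
    assert (phi t ^ T <= 1).
    { rewrite <- (pow1 T). apply pow_incr. specialize (hp t); lra. }
    rewrite Rabs_left1 by lra. match goal with |- ?a = ?b => change (@eq R a b) end; ring.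
  - exact Hd. }
apply is_derive_unique in h1. apply is_derive_unique in h3. rewrite h3 in h1.
subst dL.
replace (INR T * dphi (z tau) * phi (z tau) ^ Init.Nat.pred T) with
  (- (0 - (INR T * dphi (z tau) * phi (z tau) ^ Init.Nat.pred T))) by ring.
exact h2.
Qed.
Lemma cuberoot x : 0 < x -> Rpower x (1/3) ^ 3 = x /\ 0 < Rpower x (1/3).
Proof.
intros hx. assert (hp : 0 < Rpower x (1/3)) by (unfold Rpower; apply exp_pos).
split; [|exact hp].
rewrite <- Rpower_pow by exact hp. rewrite Rpower_mult.
replace (1/3 * INR 3) with 1 by (simpl; field). apply Rpower_1; exact hx.
Qed.

Lemma cube_bound y tau k: 0<y -> 0<tau -> 0<k -> k*tau <= y^3 ->
  / y <= / Rpower k (1/3) * Rpower tau (-(1/3)).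
Proof.
intros hy ht hk hb. destruct (cuberoot k hk) as [e1 p1]. destruct (cuberoot tau ht) as [e2 p2].
rewrite Rpower_Ropp. rewrite <- Rinv_mult. apply Rinv_le_contravar. nra.
set (s := Rpower k (1/3)) in *. set (r := Rpower tau (1/3)) in *.
destruct (Rle_or_lt (s*r) y) as [h|h]; [exact h|].
exfalso. assert (0 < s * r) by nra.
assert (y^3 < (s*r)^3).
{ set (u := s*r) in *. assert (y*y < u*u) by nra. simpl. nra. }
rewrite Rpow_mult_distr, e1, e2 in H0. lra.
Qed.

Lemma z_incr phi dphi T z : (forall x, 0 < phi x < 1) ->
  (forall x, is_derive phi x (dphi x)) -> (forall x, 0 <= dphi x) ->
  gradient_flow phi T z -> forall a b, 0 < a <= b -> z a <= z b.
Proof.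
intros hp hd hpos hf a b hab.
pose proof (incr_lemma z (fun t => INR T * dphi (z t) * phi (z t) ^ Init.Nat.pred T) 0 a b).
assert (z a + 0 * (b - a) <= z b); [|lra].
apply H; [lra| |].
- intros t ht. apply (flow_deriv phi dphi T z hp hd hf). lra.
- intros t ht. apply Rmult_le_pos. apply Rmult_le_pos. apply pos_INR. apply hpos.
  apply pow_le. specialize (hp (z t)); lra.
Qed.

Lemma phi_incr phi dphi : (forall x, is_derive phi x (dphi x)) -> (forall x, 0 <= dphi x) ->
  forall a b, a <= b -> phi a <= phi b.
Proof.
intros hd hpos a b hab.
pose proof (incr_lemma phi dphi 0 a b hab (fun t _ => hd t) (fun t _ => hpos t)). lra.
Qed.

Definition dsig (x : R) := exp (- x) / (1 + exp (- x)) ^ 2.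

Lemma sig_deriv x : is_derive sigmoid x (dsig x).
Proof.
unfold sigmoid, dsig. auto_derive.
- pose proof (exp_pos (-x)); lra.
- pose proof (exp_pos (-x)). match goal with |- ?a = ?b => change (@eq R a b) end. field; lra.
Qed.

Lemma sig_range x : 0 < sigmoid x < 1.
Proof.
unfold sigmoid. pose proof (exp_pos (-x)). split.
- apply Rdiv_lt_0_compat; lra.
- apply Rmult_lt_reg_r with (1 + exp (-x)); [lra|]. field_simplify; lra.
Qed.

Lemma dsig_pos x : 0 <= dsig x.
Proof. unfold dsig. pose proof (exp_pos (-x)). apply Rdiv_le_0_compat; [lra|]. apply pow_lt; lra. Qed.

Lemma exp_dsig x : exp x * dsig x = sigmoid x ^ 2.
Proof.
unfold dsig, sigmoid. rewrite exp_Ropp. pose proof (exp_pos x). field. split; [|lra].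
assert (0 < 1 + / exp x) by (pose proof (Rinv_0_lt_compat _ H); lra). lra.
Qed.

Lemma part_a T z : (1<=T)%nat -> gradient_flow sigmoid T z ->
  bigO_infty (fun tau => 1 - sigmoid (z tau)) (fun tau => / tau).
Proof.
intros hT hf.
set (s1 := sigmoid (z 1)).
assert (hs1: 0 < s1 < 1) by apply sig_range.
set (c := INR T * s1^2 * s1^(pred T)).
assert (hc: 0 < c).
{ unfold c. apply Rmult_lt_0_compat. apply Rmult_lt_0_compat.
  apply lt_0_INR; lia. apply pow_lt; lra. apply pow_lt; lra. }
exists (2/c), 2. intros tau htau.
assert (key: exp (z 1) + c*(tau-1) <= exp (z tau)).
{ apply (incr_lemma (fun t => exp (z t))
    (fun t => exp (z t) * (INR T * dsig (z t) * sigmoid (z t) ^ pred T)) c 1 tau); [lra| |].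
  - intros t ht.
    assert (he : is_derive exp (z t) (exp (z t))) by (auto_derive; [easy|ring]).
    pose proof (is_derive_comp exp z t (exp (z t)) _ he
      (flow_deriv sigmoid dsig T z sig_range sig_deriv hf t ltac:(lra))) as hc2.
    unfold scal in hc2; simpl in hc2; unfold mult in hc2; simpl in hc2.
    rewrite Rmult_comm. exact hc2.
  - intros t ht.
    assert (hz : z 1 <= z t) by (apply (z_incr sigmoid dsig T z sig_range sig_deriv dsig_pos hf); lra).
    assert (hs : s1 <= sigmoid (z t)) by (apply (phi_incr sigmoid dsig sig_deriv dsig_pos); exact hz).
    replace (exp (z t) * (INR T * dsig (z t) * sigmoid (z t) ^ Init.Nat.pred T))
      with (INR T * (exp (z t) * dsig (z t)) * sigmoid (z t) ^ Init.Nat.pred T) by ring.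
    rewrite exp_dsig. unfold c.
    apply Rmult_le_compat. 
    + apply Rmult_le_pos. apply pos_INR. apply pow_le; lra.
    + apply pow_le; lra.
    + apply Rmult_le_compat_l. apply pos_INR. apply pow_incr; lra.
    + apply pow_incr; lra. }
set (E := exp (z tau)) in *.
assert (hE : 0 < E) by apply exp_pos.
assert (h1 : 1 - sigmoid (z tau) = / (1 + E)).
{ unfold sigmoid. rewrite exp_Ropp. fold E. field. split; [|lra].
  assert (0 < 1 + / E) by (pose proof (Rinv_0_lt_compat _ hE); lra). lra. }
rewrite h1. pose proof (exp_pos (z 1)).
rewrite Rabs_right by (apply Rle_ge; left; apply Rinv_0_lt_compat; lra).
rewrite Rabs_right by (apply Rle_ge; left; apply Rinv_0_lt_compat; lra).
replace (2 / c * / tau) with (/ (c * tau / 2)) by (field; lra).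
apply Rinv_le_contravar. nra. nra.
Qed.

Definition dss (x : R) := / (2 + Rabs x) ^ 2.

Lemma ss_pos_form x : 0 <= x -> softsign_ns x = 1 - / (2 + x).
Proof. intros h. unfold softsign_ns. rewrite Rabs_right by lra. field. lra. Qed.

Lemma ss_neg_form x : x < 0 -> softsign_ns x = / (2 - x).
Proof. intros h. unfold softsign_ns. rewrite Rabs_left by lra. field. lra. Qed.

Lemma ss_range x : 0 < softsign_ns x < 1.
Proof.
destruct (Rle_or_lt 0 x) as [h|h].
- rewrite ss_pos_form by lra.
  assert (/ (2 + x) <= / 2) by (apply Rinv_le_contravar; lra).
  assert (0 < / (2 + x)) by (apply Rinv_0_lt_compat; lra). lra.
- rewrite ss_neg_form by lra.
  assert (/ (2 - x) < / 2) by (apply Rinv_lt_contravar; nra).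
  assert (0 < / (2 - x)) by (apply Rinv_0_lt_compat; lra). lra.
Qed.

Lemma dss_pos x : 0 <= dss x.
Proof. unfold dss. left. apply Rinv_0_lt_compat. pose proof (Rabs_pos x). apply pow_lt; lra. Qed.

Lemma pot_neg x : x < 0 -> Pot x < 0.
Proof. intros h. unfold Pot. rewrite Rabs_left by lra. simpl. nra. Qed.

Lemma pot_pos x : 0 <= x -> (2 + x) ^ 3 = 3 * Pot x + 8.
Proof. intros h. unfold Pot. rewrite Rabs_right by lra. field. Qed.

Lemma part_b T z : (1<=T)%nat -> gradient_flow softsign_ns T z ->
  bigO_infty (fun tau => 1 - softsign_ns (z tau)) (fun tau => Rpower tau (- (1 / 3))).
Proof.
intros hT hf.
set (s1 := softsign_ns (z 1)).
assert (hs1: 0 < s1 < 1) by apply ss_range.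
set (c := INR T * s1^(pred T)).
assert (hc: 0 < c).
{ unfold c. apply Rmult_lt_0_compat. apply lt_0_INR; lia. apply pow_lt; lra. }
set (P1 := Pot (z 1)).
exists (/ Rpower (3 * c / 2) (1/3)), (2 + 2 * Rabs P1 / c). intros tau htau.
assert (hM : 2 <= 2 + 2 * Rabs P1 / c).
{ assert (0 <= 2 * Rabs P1 / c) by (apply Rdiv_le_0_compat; [pose proof (Rabs_pos P1)|]; lra). lra. }
assert (key: Pot (z 1) + c*(tau-1) <= Pot (z tau)).
{ apply (incr_lemma (fun t => Pot (z t))
    (fun t => (2 + Rabs (z t)) ^ 2 * (INR T * dss (z t) * softsign_ns (z t) ^ pred T)) c 1 tau); [lra| |].
  - intros t ht.
    pose proof (is_derive_comp Pot z t _ _ (pot_deriv (z t))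
      (flow_deriv softsign_ns dss T z ss_range softsign_deriv hf t ltac:(lra))) as hc2.
    unfold scal in hc2; simpl in hc2; unfold mult in hc2; simpl in hc2.
    rewrite Rmult_comm. exact hc2.
  - intros t ht.
    assert (hz : z 1 <= z t) by (apply (z_incr softsign_ns dss T z ss_range softsign_deriv dss_pos hf); lra).
    assert (hs : s1 <= softsign_ns (z t)) by (apply (phi_incr softsign_ns dss softsign_deriv dss_pos); exact hz).
    replace ((2 + Rabs (z t)) ^ 2 * (INR T * dss (z t) * softsign_ns (z t) ^ Init.Nat.pred T))
      with (INR T * softsign_ns (z t) ^ Init.Nat.pred T).
    2:{ unfold dss. pose proof (Rabs_pos (z t)). field. lra. }
    unfold c. apply Rmult_le_compat_l. apply pos_INR. apply pow_incr; lra. }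
fold P1 in key.
assert (hP : c * tau / 2 <= Pot (z tau)).
{ assert (Rabs P1 / c * c = Rabs P1) by (field; lra).
  pose proof (Rabs_pos P1). pose proof (Rle_abs (-P1)). rewrite Rabs_Ropp in H1.
  assert (c * (2 + 2 * Rabs P1 / c) <= c * tau) by (apply Rmult_le_compat_l; lra).
  nra. }
assert (hz : 0 <= z tau).
{ destruct (Rle_or_lt 0 (z tau)) as [h|h]; [exact h|].
  pose proof (pot_neg _ h). nra. }
rewrite ss_pos_form by exact hz.
replace (1 - (1 - / (2 + z tau))) with (/ (2 + z tau)) by ring.
assert (hR : 0 < Rpower tau (- (1/3))) by (unfold Rpower; apply exp_pos).
rewrite Rabs_right by (apply Rle_ge; left; apply Rinv_0_lt_compat; lra).
rewrite Rabs_right by lra.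
apply cube_bound; try lra.
rewrite pot_pos by exact hz. lra.
Qed.

Theorem proposition2 :
  (forall (T : nat) (z : R -> R), (1 <= T)%nat ->
     gradient_flow sigmoid T z ->
     bigO_infty (fun tau => 1 - sigmoid (z tau)) (fun tau => / tau))
  /\
  (forall (T : nat) (z : R -> R), (1 <= T)%nat ->
     gradient_flow softsign_ns T z ->
     bigO_infty (fun tau => 1 - softsign_ns (z tau))
                (fun tau => Rpower tau (- (1 / 3)))).
Proof. split; [exact part_a | exact part_b]. Qed.
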